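(* Let $n\ge 2$, $N=\{1,\dots,n\}$, for each $i\in N$ let $A_i$ be a nonempty finite set, $A=\prod_{i\in N}A_i$, $u_i:A\to\mathbb{R}$, $u(a)=(u_i(a))_{i\in N}$, and fix $\lambda\in\mathbb{R}^n\setminus\{\mathbf 0\}$. Then: (1) For $\Delta=\delta^T$ sufficiently close to $1$, the solution of the problem $\max_{a^{[n]}\in A^n}W_\lambda(a^{[n]},\Delta)$ is to play, in each overlap $k=1,\dots,n$, some $a^k\in\arg\max_{a'\in A}\lambda\cdot u(a')$. Moreover, $F(\delta,T)\to V$ as $\delta^T\nearrow 1$. (2) For $\Delta=\delta^T$ sufficiently close to $0$, the solution of the problem $\max_{a^{[n]}\in A^n}W_\lambda(a^{[n]},\Delta)$ is to play, in each overlap $k=1,\dots,n$, some $a^k\in\arg\max_{a'\in A}\lambda_{k}u_{k}(a')$ (player $k$ being the youngest player in overlap $k$). Moreover, $F(\delta,T)\to\prod_{i\in N}\left[\min_{a\in A}u_i(a),\ \max_{a\in A}u_i(a)\right]$ as $\delta^T\searrow 0$.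
   Context: Here $\delta\in(0,1]$ and $T\in\mathbb{N}$. For $a^{[n]}=(a^1,\dots,a^n)\in A^n$ extend indices by $a^s=a^{s-n}$ for $s\ge n+1$, and for $\Delta\in(0,1]$ define $$v_i^\Delta(a^{[n]})=\frac{\sum_{k=1}^n\Delta^{k-1}u_i(a^{i+k-1})}{\sum_{k=1}^n\Delta^{k-1}},\qquad W_\lambda(a^{[n]},\Delta)=\sum_{i=1}^n\lambda_i v_i^\Delta(a^{[n]}).$$ ''The solution is to play ...'' means that every maximizer $(a^1,\dots,a^n)$ has the stated form. $V=\operatorname{co}\{u(a):a\in A\}$ ($\operatorname{co}$ = convex hull). For $a^{[nT]}=(a^1,\dots,a^{nT})\in A^{nT}$, extend indices by $a^s=a^{s-nT}$ for $s\ge nT+1$, set $U_i(a^{[nT]})=\frac{1}{\sum_{k=1}^{nT}\delta^{k-1}}\sum_{k=1}^{nT}\delta^{k-1}u_i(a^{(i-1)T+k})$, $U=(U_i)_{i\in N}$, and $F(\delta,T)=\operatorname{co}\left(\bigcup_{a^{[nT]}\in A^{nT}}\{U(a^{[nT]})\}\right)$. Convergence of sets is with respect to the Hausdorff distance. *)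

(* Defs.v *)
From HB Require Import structures.
From mathcomp Require Import all_boot all_order all_algebra.
From mathcomp Require Import reals.
Set Implicit Arguments. Unset Strict Implicit. Unset Printing Implicit Defensive.
Import Order.TTheory GRing.Theory Num.Theory.
Local Open Scope ring_scope.

(* Cyclic index: s mod m as an element of 'I_m (i : 'I_m only witnesses m > 0).
   Everything below is 0-based: player i in 0..n-1, overlap k in 0..n-1,
   so the paper's a^{i+k-1} (1-based, cyclic) becomes a ((i+k) mod n). *)
Lemma cycidx_lt m (i : 'I_m) (s : nat) : (s %% m < m)%N.
Proof. by rewrite ltn_pmod // (leq_ltn_trans (leq0n i) (ltn_ord i)). Qed.

Definition cycidx m (i : 'I_m) (s : nat) : 'I_m := Ordinal (cycidx_lt i s).

Section Defs.
Variable R : realType.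
Variable n : nat.
Variable A : finType.           (* the set of action profiles *)
Variable u : 'I_n -> A -> R.

Definition vD (D : R) (a : {ffun 'I_n -> A}) (i : 'I_n) : R :=
  (\sum_(k < n) D ^+ k * u i (a (cycidx i (i + k)))) / (\sum_(k < n) D ^+ k).

Definition W (lam : 'I_n -> R) (a : {ffun 'I_n -> A}) (D : R) : R :=
  \sum_(i < n) lam i * vD D a i.

Definition is_maximizer (lam : 'I_n -> R) (D : R) (a : {ffun 'I_n -> A}) : Prop :=
  forall b : {ffun 'I_n -> A}, W lam b D <= W lam a D.

Definition dotu (lam : 'I_n -> R) (a : A) : R := \sum_(i < n) lam i * u i a.

(* U_i(a^[nT]) ; the paper's a^{(i-1)T+k} (1-based) is b((i*T + k) mod nT) 0-based *)
Definition Upay (delta : R) (T : nat) (b : {ffun 'I_(n * T) -> A}) : 'I_n -> R :=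
  fun i => (\sum_(k < n * T) delta ^+ k * u i (b (cycidx k (i * T + k))))
           / (\sum_(k < n * T) delta ^+ k).

Definition hull (I : finType) (p : I -> 'I_n -> R) : ('I_n -> R) -> Prop :=
  fun x => exists w : I -> R,
    [/\ forall j, 0 <= w j, \sum_j w j = 1 & forall i, x i = \sum_j w j * p j i].

Definition Vset : ('I_n -> R) -> Prop := hull (fun a i => u i a).

Definition Fset (delta : R) (T : nat) : ('I_n -> R) -> Prop :=
  @hull {ffun 'I_(n * T) -> A} (@Upay delta T).

(* prod_i [min_a u_i(a), max_a u_i(a)]  (min_a u_i a <= x  iff  exists a, u_i a <= x) *)
Definition box : ('I_n -> R) -> Prop :=
  fun x => forall i, (exists a, u i a <= x i) /\ (exists a, x i <= u i a).

End Defs.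

(* Hausdorff distance (w.r.t. the sup norm on R^n) at most e:
   each set is contained in the closed e-neighbourhood of the other. *)
Definition hclose (R : realType) (n : nat) (X Y : ('I_n -> R) -> Prop) (e : R) : Prop :=
  (forall x, X x -> exists y, Y y /\ forall i, `|x i - y i| <= e) /\
  (forall y, Y y -> exists x, X x /\ forall i, `|x i - y i| <= e).

(* Main.v *)
Require Import Defs.
From HB Require Import structures.
From mathcomp Require Import all_boot all_order all_algebra.
From mathcomp Require Import reals.
From mathcomp Require Import lra ring.
Import Order.TTheory GRing.Theory Num.Theory.
Local Open Scope ring_scope.
Set Implicit Arguments. Unset Strict Implicit. Unset Printing Implicit Defensive.

Lemma cycidx_w m (i j : 'I_m) s : cycidx i s = cycidx j s.
Proof. by apply: val_inj. Qed.

Lemma cycidx_small m (i : 'I_m) s : (s < m)%N -> val (cycidx i s) = s.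
Proof. by move=> h; rewrite /= modn_small. Qed.

Lemma cyc_sum (R : realType) m (w : 'I_m) s (F : 'I_m -> R) :
  \sum_(k < m) F (cycidx w (s + k)) = \sum_(j < m) F j.
Proof.
have inj : injective (fun k : 'I_m => cycidx w (s + k)).
  move=> k1 k2 /(congr1 val) /= /eqP; rewrite eqn_modDl !modn_small //.
  by move=> /eqP h; apply: val_inj.
by rewrite [RHS](reindex_inj inj).
Qed.

Section Num.
Variable R : realType.

Lemma expr_bounds (D : R) m k : 0 < D <= 1 -> (k <= m)%N ->
  D ^+ m <= D ^+ k <= 1.
Proof.
move=> /andP[D0 D1] km; apply/andP; split; last by rewrite exprn_ile1 // ltW.
rewrite -(subnK km) exprD ler_piMl //; first by rewrite exprn_ge0 // ltW.
by rewrite exprn_ile1 // ltW.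
Qed.

Lemma sum_bounds (D : R) m : 0 < D <= 1 ->
  m%:R * D ^+ m <= \sum_(k < m) D ^+ k <= m%:R.
Proof.
move=> hD; apply/andP; split.
  have E : \sum_(k < m) D ^+ m = m%:R * D ^+ m by rewrite sumr_const card_ord mulr_natl.
  rewrite -E.
  by apply: ler_sum => k _; case/andP: (expr_bounds hD (ltnW (ltn_ord k))).
have E : \sum_(k < m) (1 : R) = m%:R by rewrite sumr_const card_ord.
rewrite -E.
by apply: ler_sum => k _; case/andP: (expr_bounds hD (ltnW (ltn_ord k))).
Qed.

Lemma box_dist (x y lo hi : R) : lo <= x <= hi -> lo <= y <= hi -> `|x - y| <= hi - lo.
Proof. move=> /andP[? ?] /andP[? ?]; rewrite ler_norml; apply/andP; split; lra. Qed.

Lemma wavg_avg m (D M : R) (c : nat -> R) : (0 < m)%N -> 0 < D <= 1 ->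
  (forall k, (k < m)%N -> `|c k| <= M) ->
  `| (\sum_(k < m) D ^+ k * c k) / (\sum_(k < m) D ^+ k) - (\sum_(k < m) c k) / m%:R |
    <= M * ((D ^+ m)^-1 - D ^+ m).
Proof.
move=> m0 hD hc.
set S := \sum_(k < m) D ^+ k; set q := D ^+ m.
have q0 : 0 < q by rewrite exprn_gt0 //; case/andP: hD.
have m0' : 0 < m%:R :> R by rewrite ltr0n.
have /andP[Slo Shi] := sum_bounds m hD; rewrite -/S -/q in Slo Shi.
have S0 : 0 < S by apply: lt_le_trans Slo; rewrite mulr_gt0.
have -> : (\sum_(k < m) D ^+ k * c k) / S - (\sum_(k < m) c k) / m%:R =
          \sum_(k < m) (D ^+ k / S - 1 / m%:R) * c k.
  rewrite !mulr_suml -sumrB; apply: eq_bigr => k _; ring.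
apply: (le_trans (ler_norm_sum _ _ _)).
apply: (@le_trans _ _ (\sum_(k < m) ((m%:R * q)^-1 - q / m%:R) * M)).
  apply: ler_sum => k _; rewrite normrM; apply: ler_pM => //.
  have /andP[dlo dhi] := expr_bounds hD (ltnW (ltn_ord k)); rewrite -/q in dlo.
  set d := D ^+ k in dlo dhi *.
  set iS := S^-1. set im := (m%:R : R)^-1. set iq := q^-1.
  have iS0 : 0 < iS by rewrite invr_gt0.
  have im0 : 0 < im by rewrite invr_gt0.
  have iq0 : 0 < iq by rewrite invr_gt0.
  have eS : iS * S = 1 by rewrite mulVf // gt_eqF.
  have em : im * m%:R = 1 by rewrite mulVf // gt_eqF.
  have eq : iq * q = 1 by rewrite mulVf // gt_eqF.
  have q1 : q <= 1 by case/andP: hD => D0 D1; rewrite exprn_ile1 // ltW.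
  have h3: (im*iq)*(m%:R*q) = 1 by rewrite mulrACA; nra.
  rewrite invfM -/im -/iq; apply: box_dist.
    apply/andP; split.
      have h: im <= iS. have h1: 0 < iS * im by rewrite mulr_gt0. nra. nra.
    have h: iS <= im * iq. have h1: 0 < im * iq by rewrite !mulr_gt0.
    have h2: iS*(m%:R*q) <= 1 by nra.
    nra. nra.
  rewrite mul1r; apply/andP; split; first by nra.
  nra.
  by apply: hc.
rewrite sumr_const card_ord.
have -> : ((m%:R * q)^-1 - q / m%:R) * M *+ m = M * (q^-1 - q).
  rewrite -mulr_natl; field; apply/andP; split; by rewrite gt_eqF.
by [].
Qed.

Lemma tail_bound n T (D : R) : 0 < D <= 1 ->
  \sum_(T <= k < n.+1 * T) D ^+ k <= n%:R * D ^+ T * \sum_(0 <= k < T) D ^+ k.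
Proof.
move=> hD; have D0 : 0 <= D by case/andP: hD => /ltW.
elim: n => [|n IH]; first by rewrite mul1n big_geq // mul0r mul0r.
rewrite (@big_cat_nat _ _ _ (n.+1 * T)) /=; last 2 first.
- by rewrite mulSn leq_addr.
- by rewrite leq_mul2r leqnSn orbT.
rewrite -[X in X%:R]addn1 natrD !mulrDl mul1r lerD //.
rewrite -{1}(add0n (n.+1 * T)%N) big_addn.
have -> : (n.+2 * T - n.+1 * T = T)%N by rewrite [(n.+2 * T)%N]mulSn addnK.
rewrite mulr_sumr; apply: ler_sum => k _.
rewrite exprD mulrC ler_wpM2r ?exprn_ge0 //.
have hTn : (T <= n.+1 * T)%N by rewrite mulSn leq_addr.
by case/andP: (expr_bounds hD hTn).
Qed.

Lemma wavg_head m T (D M e : R) (c : nat -> R) : (0 < T)%N -> (T <= m)%N -> 0 < D <= 1 ->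
  (forall k, (k < T)%N -> c k = e) -> (forall k, (k < m)%N -> `|c k| <= M) -> `|e| <= M ->
  `| (\sum_(k < m) D ^+ k * c k) / (\sum_(k < m) D ^+ k) - e |
    <= 2 * M * (\sum_(T <= k < m) D ^+ k) / (\sum_(0 <= k < T) D ^+ k).
Proof.
move=> T0 Tm hD hce hc he.
have D0 : 0 <= D by case/andP: hD => /ltW.
rewrite -(big_mkord xpredT (fun k => D ^+ k * c k)) -(big_mkord xpredT (fun k => D ^+ k)).
rewrite (big_cat_nat (leq0n T) Tm) /= (big_cat_nat (leq0n T) Tm) /=.
set S1 := \sum_(0 <= k < T) D ^+ k; set S2 := \sum_(T <= k < m) D ^+ k.
have -> : \sum_(0 <= k < T) D ^+ k * c k = e * S1.
  rewrite /S1 mulr_sumr big_nat_cond [RHS]big_nat_cond; apply: eq_bigr => k /andP[/andP[_ kT] _].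
  by rewrite hce // mulrC.
set N2 := \sum_(T <= k < m) D ^+ k * c k.
have S2ge : 0 <= S2 by apply: sumr_ge0 => k _; rewrite exprn_ge0.
have S1gt : 0 < S1.
  rewrite /S1 big_mkord; have /andP[h _] := sum_bounds T hD.
  by apply: lt_le_trans h; rewrite mulr_gt0 ?ltr0n ?exprn_gt0 //; case/andP: hD.
have N2le : `|N2| <= M * S2.
  rewrite /N2 /S2 mulr_sumr; apply: (le_trans (ler_norm_sum _ _ _)).
  rewrite big_nat_cond [X in _ <= X]big_nat_cond; apply: ler_sum => k /andP[/andP[_ km] _].
  by rewrite normrM ger0_norm ?exprn_ge0 // mulrC ler_wpM2r ?exprn_ge0 // hc.
have M0 : 0 <= M by apply: le_trans he.
have -> : (e * S1 + N2) / (S1 + S2) - e = (N2 - e * S2) * (S1 + S2)^-1.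
  field; by rewrite gt_eqF // ltr_wpDr.
have Y : `|N2 - e * S2| <= 2 * M * S2.
  apply: (le_trans (ler_normB _ _)); rewrite normrM (ger0_norm S2ge).
  have : `|e| * S2 <= M * S2 by rewrite ler_wpM2r.
  move: N2le; set a := `|N2|; set b := `|e| * S2. lra.
rewrite normrM normfV (ger0_norm (addr_ge0 (ltW S1gt) S2ge)).
set i12 := (S1 + S2)^-1. set i1 := S1^-1.
have i12ge : 0 <= i12 by rewrite invr_ge0 addr_ge0 // ltW.
have i1le : i12 <= i1 by rewrite lef_pV2 ?posrE ?ltr_wpDr // lerDl.
apply: (le_trans (ler_wpM2r i12ge Y)); apply: ler_wpM2l => //.
by rewrite !mulr_ge0.
Qed.

End Num.
Section Hull.
Variable R : realType.
Variable n : nat.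

Lemma hull_push (I J : finType) (p : I -> 'I_n -> R) (f : J -> I) (w : J -> R) (x : 'I_n -> R) :
  (forall j, 0 <= w j) -> \sum_j w j = 1 ->
  (forall i, x i = \sum_j w j * p (f j) i) -> hull p x.
Proof.
move=> w0 w1 hx; exists (fun b => \sum_(j | f j == b) w j); split.
- by move=> b; apply: sumr_ge0.
- by rewrite -w1 (partition_big f xpredT).
- move=> i; rewrite hx (partition_big f xpredT) //=; apply: eq_bigr => b _.
  by rewrite mulr_suml; apply: eq_bigr => j /eqP <-.
Qed.

Lemma comb_close (I : finType) (w : I -> R) (P Q : I -> R) (e : R) :
  (forall j, 0 <= w j) -> \sum_j w j = 1 -> (forall j, `|P j - Q j| <= e) ->
  `|\sum_j w j * P j - \sum_j w j * Q j| <= e.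
Proof.
move=> w0 w1 h; rewrite -sumrB.
apply: (le_trans (ler_norm_sum _ _ _)).
have -> : e = \sum_j w j * e by rewrite -mulr_suml w1 mul1r.
apply: ler_sum => j _; rewrite -mulrBr normrM ger0_norm //.
by apply: ler_wpM2l.
Qed.

Lemma comb_bounds (I : finType) (w : I -> R) (P : I -> R) (lo hi : R) :
  (forall j, 0 <= w j) -> \sum_j w j = 1 -> (forall j, lo <= P j <= hi) ->
  lo <= \sum_j w j * P j <= hi.
Proof.
move=> w0 w1 h; apply/andP; split.
  have -> : lo = \sum_j w j * lo by rewrite -mulr_suml w1 mul1r.
  by apply: ler_sum => j _; apply: ler_wpM2l => //; case/andP: (h j).
have -> : hi = \sum_j w j * hi by rewrite -mulr_suml w1 mul1r.
by apply: ler_sum => j _; apply: ler_wpM2l => //; case/andP: (h j).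
Qed.

Lemma wavg_bounds m (D lo hi : R) (c : nat -> R) : (0 < m)%N -> 0 < D ->
  (forall k, (k < m)%N -> lo <= c k <= hi) ->
  lo <= (\sum_(k < m) D ^+ k * c k) / (\sum_(k < m) D ^+ k) <= hi.
Proof.
move=> m0 D0 h.
have S0 : 0 < \sum_(k < m) D ^+ k.
  rewrite (bigD1 (Ordinal m0)) //= expr0 ltr_pwDl //.
  by apply: sumr_ge0 => k _; rewrite exprn_ge0 // ltW.
rewrite ler_pdivlMr // ler_pdivrMr //; apply/andP; split.
  rewrite mulr_sumr; apply: ler_sum => k _; rewrite [lo * _]mulrC.
  by rewrite ler_wpM2l ?exprn_ge0 ?(ltW D0) //; by case/andP: (h k (ltn_ord k)).
rewrite mulr_sumr; apply: ler_sum => k _; rewrite [hi * _]mulrC.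
by rewrite ler_wpM2l ?exprn_ge0 ?(ltW D0) //; by case/andP: (h k (ltn_ord k)).
Qed.

Lemma wavg_const m (D e : R) : (0 < m)%N -> 0 < D ->
  (\sum_(k < m) D ^+ k * e) / (\sum_(k < m) D ^+ k) = e.
Proof.
move=> m0 D0.
have S0 : 0 < \sum_(k < m) D ^+ k.
  rewrite (bigD1 (Ordinal m0)) //= expr0 ltr_pwDl //.
  by apply: sumr_ge0 => k _; rewrite exprn_ge0 // ltW.
by rewrite -mulr_suml mulrAC mulfV ?mul1r // gt_eqF.
Qed.

Lemma exists_gap (I : finType) (f : I -> R) (P : pred I) :
  (forall i, P i -> 0 < f i) -> exists g, 0 < g /\ forall i, P i -> g <= f i.
Proof.
move=> hf.
suff [g [g0 hg]] : exists g, 0 < g /\ forall i, i \in enum I -> P i -> g <= f i.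
  by exists g; split => // i; apply: hg; rewrite mem_enum.
elim: (enum I) => [|x s [g [g0 hg]]]; first by exists 1; split.
case Px : (P x).
  exists (if g < f x then g else f x); split; first by case: ifP => // _; apply: hf.
  move=> i; rewrite in_cons => /orP[/eqP -> _|si Pi].
    by case: ifP => // /ltW.
  have := hg i si Pi; case: ifP => // /negbT; rewrite -leNgt => h1 h2.
  exact: le_trans h1 h2.
exists g; split => // i; rewrite in_cons => /orP[/eqP ->|si Pi]; first by rewrite Px.
exact: hg.
Qed.

Lemma pick_eta (c K g : R) : 1 <= c -> 0 <= K -> 0 < g ->
  exists eta, [/\ 0 < eta, eta * c <= 1 & K * eta < g].
Proof.
move=> c1 K0 g0.
have d0 : 0 < c * (g + K + 1) by rewrite mulr_gt0 //; lra.
exists (g / (c * (g + K + 1))); split.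
- by rewrite divr_gt0.
- rewrite mulrAC ler_pdivrMr // mul1r.
  have h : g * c <= c * (g + K + 1) :> R by nra.
  exact: h.
- rewrite mulrA ltr_pdivrMr //.
  have h : K < c * (g + K + 1) by nra.
  rewrite mulrC ltr_pM2l //.
Qed.

Lemma bernoulli (x : R) m : 0 <= x <= 1 -> 1 - x ^+ m <= m%:R * (1 - x).
Proof.
move=> /andP[x0 x1]; elim: m => [|m IH]; first by rewrite expr0 subrr mul0r.
rewrite exprS -[X in X%:R]addn1 natrD mulrDl mul1r.
have h : x ^+ m <= 1 by rewrite exprn_ile1.
have h' : 0 <= x ^+ m by rewrite exprn_ge0.
nra.
Qed.

Lemma q_bound (x eta : R) m : (0 < m)%N -> 0 < x <= 1 -> 1 - x < eta ->
  eta * (2 * m%:R) <= 1 -> (x ^+ m)^-1 - x ^+ m <= 4 * m%:R * eta.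
Proof.
move=> m0 hx hxe he.
have hx' : 0 <= x <= 1 by case/andP: hx => /ltW -> ->.
have B := bernoulli m hx'.
have m1 : 1 <= m%:R :> R by rewrite ler1n.
set q := x ^+ m in B *.
have q1 : q <= 1 by rewrite exprn_ile1 //; case/andP: hx' .
have qh : 1/2 <= q by nra.
have q0 : 0 < q by lra.
set iq := q^-1.
have eq : iq * q = 1 by rewrite mulVf // gt_eqF.
have iq0 : 0 < iq by rewrite invr_gt0.
have iq2 : iq <= 2 by nra.
nra.
Qed.


Definition pw (t : 'I_n -> R) (s : {ffun 'I_n -> bool}) : R :=
  \prod_j (if s j then t j else 1 - t j).

Lemma prod_marg (t : 'I_n -> R) (i0 : 'I_n) (p q : R) :
  \sum_(s : {ffun 'I_n -> bool}) pw t s * (if s i0 then p else q) =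
  t i0 * p + (1 - t i0) * q.
Proof.
pose F := fun j (b : bool) => if b then t j else 1 - t j.
pose G := fun j (b : bool) => if j == i0 then F j b * (if b then p else q) else F j b.
have E : forall s : {ffun 'I_n -> bool},
    pw t s * (if s i0 then p else q) = \prod_j G j (s j).
  move=> s; rewrite /pw (bigD1 i0) //= [RHS](bigD1 i0) //= /G eqxx.
  rewrite mulrAC; congr (_ * _).
  by apply: eq_bigr => j /negbTE ->.
under eq_bigr => s _ do rewrite E.
rewrite -(bigA_distr_bigA G) (bigD1 i0) //= [X in _ * X]big1 ?mulr1.
  by rewrite big_bool /G eqxx /F.
move=> j hj; rewrite big_bool /G (negbTE hj) /F /=; by rewrite addrC subrK.
Qed.

Lemma pw_sum (t : 'I_n -> R) : \sum_(s : {ffun 'I_n -> bool}) pw t s = 1.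
Proof.
have [i0|n0] := pickP (fun _ : 'I_n => true).
  have h := prod_marg t i0 1 1.
  have -> : \sum_(s : {ffun 'I_n -> bool}) pw t s =
     \sum_(s : {ffun 'I_n -> bool}) pw t s * (if s i0 then 1 else 1).
    by apply: eq_bigr => s _; rewrite if_same mulr1.
  by rewrite h !mulr1 addrC subrK.
have E : forall s : {ffun 'I_n -> bool}, pw t s = 1.
  by move=> s; rewrite /pw big_pred0 // => j; rewrite n0.
under eq_bigr => s _ do rewrite E.
rewrite sumr_const.
have -> : #|{: {ffun 'I_n -> bool}}| = 1%N.
  rewrite card_ffun card_bool.
  have -> : #|'I_n| = 0%N by apply: eq_card0 => x; have := n0 x.
  by [].
by [].
Qed.

Lemma pw_ge0 (t : 'I_n -> R) s : (forall j, 0 <= t j <= 1) -> 0 <= pw t s.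
Proof.
move=> ht; apply: prodr_ge0 => j _; case: ifP => _; case/andP: (ht j) => ? ?; lra.
Qed.

End Hull.

Section Main.
Variable R : realType.
Variable n : nat.
Variable Ai : 'I_n -> finType.
Local Notation A := {dffun forall i : 'I_n, Ai i}.
Variable u : 'I_n -> A -> R.
Variable lam : 'I_n -> R.
Hypothesis n2 : (2 <= n)%N.

Definition Mu := \sum_i \sum_(a : A) `|u i a|.
Definition Lam := \sum_i `|lam i|.

Lemma Mu_ge0 : 0 <= Mu.
Proof. by apply: sumr_ge0 => i _; apply: sumr_ge0. Qed.

Lemma Lam_ge0 : 0 <= Lam.
Proof. by apply: sumr_ge0. Qed.

Lemma uMu i a : `|u i a| <= Mu.
Proof.
rewrite /Mu (bigD1 i) //= (bigD1 a) //= -addrA lerDl addr_ge0 //.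
  by apply: sumr_ge0.
by apply: sumr_ge0 => j _; apply: sumr_ge0.
Qed.

Lemma n0 : (0 < n)%N. Proof. exact: leq_trans n2. Qed.

Lemma W_close (D : R) (a : {ffun 'I_n -> A}) (L : 'I_n -> R) (E : R) :
  (forall i, `|vD u D a i - L i| <= E) -> `|W u lam a D - \sum_i lam i * L i| <= Lam * E.
Proof.
move=> h; rewrite /W -sumrB.
apply: (le_trans (ler_norm_sum _ _ _)); rewrite /Lam mulr_suml.
by apply: ler_sum => i _; rewrite -mulrBr normrM ler_wpM2l.
Qed.

Lemma vD_avg (D : R) (x : {ffun 'I_n -> A}) i : 0 < D <= 1 ->
  `|vD u D x i - (\sum_j u i (x j)) / n%:R| <= Mu * ((D ^+ n)^-1 - D ^+ n).
Proof.
move=> hD.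
have := @wavg_avg R n D Mu (fun k => u i (x (cycidx i (i + k)))) n0 hD (fun k _ => uMu _ _).
by rewrite (cyc_sum i i (fun j => u i (x j))).
Qed.

Lemma cycidx0 (i : 'I_n) : cycidx i (i + 0) = i.
Proof. by apply: val_inj; rewrite /= addn0 modn_small. Qed.

Lemma vD_head (D : R) (x : {ffun 'I_n -> A}) i : 0 < D <= 1 ->
  `|vD u D x i - u i (x i)| <= 2 * Mu * n%:R * D.
Proof.
move=> hD.
have := @wavg_head R n 1 D Mu (u i (x i)) (fun k => u i (x (cycidx i (i + k)))) isT n0 hD.
move=> /(_ _ (fun k _ => uMu _ _) (uMu _ _)) h.
have {}h : `|vD u D x i - u i (x i)| <= 2 * Mu * (\sum_(1 <= k < n) D ^+ k) / (\sum_(0 <= k < 1) D ^+ k).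
  apply: h => k; rewrite ltnS leqn0 => /eqP ->; by rewrite cycidx0.
apply: (le_trans h); rewrite big_nat1 expr0 divr1 -!mulrA ler_wpM2l // ler_wpM2l ?Mu_ge0 //.
have [n' en] : exists n', n = n'.+1 by exists n.-1; rewrite prednK // n0.
have := @tail_bound R n' 1 D hD; rewrite muln1 -en big_nat1 expr0 expr1 mulr1 => h2.
apply: (le_trans h2); rewrite ler_wpM2r //; first by case/andP: hD => /ltW.
by rewrite en ler_nat.
Qed.


Lemma L_eq (y : {ffun 'I_n -> A}) :
  \sum_i lam i * ((\sum_j u i (y j)) / n%:R) = (\sum_j dotu u lam (y j)) / n%:R.
Proof.
transitivity ((\sum_i \sum_j lam i * u i (y j)) / n%:R).
  by rewrite mulr_suml; apply: eq_bigr => i _; rewrite mulrA mulr_sumr.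
by rewrite exchange_big.
Qed.

Lemma swap_sum (F : A -> R) (a : {ffun 'I_n -> A}) k a' :
  \sum_j F ([ffun j => if j == k then a' else a j] j) - \sum_j F (a j) = F a' - F (a k).
Proof.
rewrite (bigD1 k) //= [X in _ - X](bigD1 k) //= ffunE eqxx.
have -> : \sum_(j | j != k) F ([ffun j => if j == k then a' else a j] j) =
          \sum_(j | j != k) F (a j).
  by apply: eq_bigr => j /negbTE hj; rewrite ffunE hj.
by rewrite opprD addrACA subrr addr0.
Qed.

Lemma part1a : exists eta : R, 0 < eta /\
     forall (delta : R) (T : nat), 0 < delta <= 1 -> (0 < T)%N ->
       1 - eta < delta ^+ T ->
       forall a : {ffun 'I_n -> A},
         is_maximizer u lam (delta ^+ T) a ->
         forall (k : 'I_n) (a' : A), dotu u lam a' <= dotu u lam (a k).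
Proof.
have [g0 [g0pos hg]] := @exists_gap R _ (fun p : A * A => dotu u lam p.1 - dotu u lam p.2)
   (fun p => dotu u lam p.2 < dotu u lam p.1) (fun p h => (eqbRL (subr_gt0 _ _) h)).
have n1 : 1 <= n%:R :> R by rewrite ler1n n0.
have c1 : 1 <= 2 * n%:R :> R by lra.
have K0 : 0 <= 8 * n%:R ^+ 2 * (Lam * Mu) :> R.
  by rewrite !mulr_ge0 ?Lam_ge0 ?Mu_ge0 // ?exprn_ge0 //; lra.
have [eta [eta0 etac etaK]] := pick_eta c1 K0 g0pos.
exists eta; split => // delta T hd T0 hx a amax k a'.
rewrite leNgt; apply/negP => hlt.
set x := delta ^+ T in hx amax.
have hx1 : 0 < x <= 1.
  case/andP: hd => d0 d1; rewrite exprn_gt0 //= exprn_ile1 // ltW //.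
set b := [ffun j => if j == k then a' else a j].
set e := Lam * (Mu * (4 * n%:R * eta)).
have close : forall y, `|W u lam y x - (\sum_j dotu u lam (y j)) / n%:R| <= e.
  move=> y; rewrite -L_eq; apply: W_close => i.
  apply: (le_trans (vD_avg _ _ hx1)); rewrite ler_wpM2l ?Mu_ge0 //.
  by apply: q_bound => //; [exact: n0 | lra].
have gap := hg (a', a k) hlt; rewrite /= in gap.
have Wba := amax b.
have cb := close b; have ca := close a.
have Eb : (\sum_j dotu u lam (b j)) / n%:R - (\sum_j dotu u lam (a j)) / n%:R =
          (dotu u lam a' - dotu u lam (a k)) / n%:R.
  by rewrite -mulrBl swap_sum.
move: Eb cb ca Wba gap.
set Lb := (\sum_j dotu u lam (b j)) / n%:R.
set La := (\sum_j dotu u lam (a j)) / n%:R.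
set ga := dotu u lam a' - dotu u lam (a k).
rewrite !ler_norml => Eb /andP[cb1 cb2] /andP[ca1 ca2] Wba gap.
have h1 : ga / n%:R <= 2 * e by lra.
have h2 : ga <= 2 * e * n%:R by rewrite -ler_pdivrMr // (lt_le_trans ltr01 n1).
have : 2 * e * n%:R = 8 * n%:R ^+ 2 * (Lam * Mu) * eta by rewrite /e; ring.
lra.
Qed.


Lemma swap_sum2 (F : 'I_n -> A -> R) (a : {ffun 'I_n -> A}) k a' :
  \sum_j F j ([ffun j => if j == k then a' else a j] j) - \sum_j F j (a j) = F k a' - F k (a k).
Proof.
rewrite (bigD1 k) //= [X in _ - X](bigD1 k) //= ffunE eqxx.
have -> : \sum_(j | j != k) F j ([ffun j => if j == k then a' else a j] j) =
          \sum_(j | j != k) F j (a j).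
  by apply: eq_bigr => j /negbTE hj; rewrite ffunE hj.
by rewrite opprD addrACA subrr addr0.
Qed.

Lemma part2a : exists eta : R, 0 < eta /\
     forall (delta : R) (T : nat), 0 < delta <= 1 -> (0 < T)%N ->
       delta ^+ T < eta ->
       forall a : {ffun 'I_n -> A},
         is_maximizer u lam (delta ^+ T) a ->
         forall (k : 'I_n) (a' : A), lam k * u k a' <= lam k * u k (a k).
Proof.
have [g0 [g0pos hg]] := @exists_gap R _
   (fun p : 'I_n * (A * A) => lam p.1 * u p.1 p.2.1 - lam p.1 * u p.1 p.2.2)
   (fun p => lam p.1 * u p.1 p.2.2 < lam p.1 * u p.1 p.2.1) (fun p h => (eqbRL (subr_gt0 _ _) h)).
have n1 : 1 <= n%:R :> R by rewrite ler1n n0.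
have c1 : 1 <= 1 :> R by [].
have K0 : 0 <= 4 * n%:R * (Lam * Mu) :> R.
  by rewrite !mulr_ge0 ?Lam_ge0 ?Mu_ge0 //; lra.
have [eta [eta0 etac etaK]] := pick_eta c1 K0 g0pos.
exists eta; split => // delta T hd T0 hx a amax k a'.
rewrite leNgt; apply/negP => hlt.
set x := delta ^+ T in hx amax.
have hx1 : 0 < x <= 1.
  case/andP: hd => d0 d1; rewrite exprn_gt0 //= exprn_ile1 // ltW //.
set b := [ffun j => if j == k then a' else a j].
set e := Lam * (2 * Mu * n%:R * x).
have close : forall y, `|W u lam y x - \sum_j lam j * u j (y j)| <= e.
  by move=> y; apply: W_close => i; apply: vD_head.
have gap := hg (k, (a', a k)) hlt; rewrite /= in gap.
have Wba := amax b.
have cb := close b; have ca := close a.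
have Eb := swap_sum2 (fun j c => lam j * u j c) a k a'.
move: Eb cb ca Wba gap; rewrite -/b.
set Lb := \sum_j lam j * u j (b j).
set La := \sum_j lam j * u j (a j).
set ga := lam k * u k a' - lam k * u k (a k).
rewrite !ler_norml => Eb /andP[cb1 cb2] /andP[ca1 ca2] Wba gap.
have h1 : ga <= 2 * e by lra.
have : 2 * e = 4 * n%:R * (Lam * Mu) * x by rewrite /e; ring.
have : 4 * n%:R * (Lam * Mu) * x <= 4 * n%:R * (Lam * Mu) * eta.
  by rewrite ler_wpM2l // ltW.
lra.
Qed.


Lemma Upay_avg (delta : R) T (b : {ffun 'I_(n * T) -> A}) i : 0 < delta <= 1 -> (0 < T)%N ->
  `|Upay u delta b i - (\sum_j u i (b j)) / (n * T)%:R| <=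
     Mu * ((delta ^+ (n * T))^-1 - delta ^+ (n * T)).
Proof.
move=> hd T0.
have m0 : (0 < n * T)%N by rewrite muln_gt0 n0.
pose w := Ordinal m0.
rewrite /Upay.
have -> : \sum_(k < n * T) delta ^+ k * u i (b (cycidx k (i * T + k))) =
          \sum_(k < n * T) delta ^+ k * u i (b (cycidx w (i * T + k))).
  by apply: eq_bigr => k _; rewrite (cycidx_w k w).
have := @wavg_avg R (n * T) delta Mu (fun k => u i (b (cycidx w (i * T + k)))) m0 hd
   (fun k _ => uMu _ _).
by rewrite (cyc_sum w (i * T) (fun j => u i (b j))).
Qed.

Lemma Upay_const (delta : R) T (a : A) i : 0 < delta -> (0 < T)%N ->
  @Upay _ _ _ u delta T [ffun _ => a] i = u i a.
Proof.
move=> d0 T0; rewrite /Upay.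
under eq_bigr => k _ do rewrite ffunE.
by apply: wavg_const => //; rewrite muln_gt0 n0.
Qed.

Lemma part1b : forall eps : R, 0 < eps -> exists eta : R, 0 < eta /\
     forall (delta : R) (T : nat), 0 < delta <= 1 -> (0 < T)%N ->
       1 - eta < delta ^+ T -> hclose (Fset u delta T) (Vset u) eps.
Proof.
move=> eps eps0.
have n1 : 1 <= n%:R :> R by rewrite ler1n n0.
have c1 : 1 <= 2 * n%:R :> R by lra.
have K0 : 0 <= 4 * n%:R * Mu :> R by rewrite !mulr_ge0 ?Mu_ge0 //; lra.
have [eta [eta0 etac etaK]] := pick_eta c1 K0 eps0.
exists eta; split => // delta T hd T0 hx.
have hx1 : 0 < delta ^+ T <= 1.
  case/andP: hd => d0 d1; rewrite exprn_gt0 //= exprn_ile1 // ltW //.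
have m0 : (0 < n * T)%N by rewrite muln_gt0 n0.
have mR : 0 < (n * T)%:R :> R by rewrite ltr0n.
split.
- move=> x [w [w0 w1 xe]].
  exists (fun i => \sum_b w b * ((\sum_j u i (b j)) / (n * T)%:R)); split.
    apply: (@hull_push _ _ _ _ _ (fun p : {ffun 'I_(n * T) -> A} * 'I_(n * T) => p.1 p.2)
                (fun p => w p.1 / (n * T)%:R)).
    + by move=> p; rewrite divr_ge0 // ltW.
    + rewrite -(pair_big xpredT xpredT (fun b (j : 'I_(n * T)) => w b / (n * T)%:R)) /=.
      rewrite -[RHS]w1; apply: eq_bigr => b _; rewrite sumr_const card_ord.
      by rewrite -(mulr_natr (w b / (n * T)%:R) (n * T)) mulfVK // gt_eqF.
    + move=> i; rewrite -(pair_big xpredT xpredT (fun b (j : 'I_(n * T)) => w b / (n * T)%:R * u i (b j))) /=.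
      apply: eq_bigr => b _; rewrite mulrA mulr_sumr mulr_suml; apply: eq_bigr => j _.
      by rewrite mulrAC.
  move=> i; rewrite xe.
  apply: comb_close => // b.
  apply: (le_trans (Upay_avg _ _ hd T0)).
  rewrite mulnC exprM.
  apply: (@le_trans _ _ (Mu * (4 * n%:R * eta))).
    by rewrite ler_wpM2l ?Mu_ge0 //; apply: q_bound => //; [exact: n0 | lra].
  have : 4 * n%:R * Mu * eta = Mu * (4 * n%:R * eta) by ring.
  lra.
- move=> y [w [w0 w1 ye]]; exists y; split; last first.
    by move=> i; rewrite subrr normr0 ltW.
  apply: (@hull_push _ _ _ _ _ (fun a : A => [ffun _ => a]) w) => // i.
  rewrite ye; apply: eq_bigr => a _.
  by rewrite Upay_const //; case/andP: hd.
Qed.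


Lemma exists_min (I : finType) (F : I -> R) (i0 : I) : exists a, forall a', F a <= F a'.
Proof.
case: (@arg_minP _ _ _ i0 xpredT F isT) => a _ h; exists a => a'; exact: h a' isT.
Qed.

Lemma exists_max (I : finType) (F : I -> R) (i0 : I) : exists a, forall a', F a' <= F a.
Proof.
case: (@arg_maxP _ _ _ i0 xpredT F isT) => a _ h; exists a => a'; exact: h a' isT.
Qed.

Lemma Upay_bounds (delta : R) T (b : {ffun 'I_(n * T) -> A}) i lo hi :
  0 < delta -> (0 < T)%N -> (forall a, lo <= u i a <= hi) ->
  lo <= Upay u delta b i <= hi.
Proof.
move=> d0 T0 h.
have m0 : (0 < n * T)%N by rewrite muln_gt0 n0.
pose w := Ordinal m0.
rewrite /Upay.
have -> : \sum_(k < n * T) delta ^+ k * u i (b (cycidx k (i * T + k))) =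
          \sum_(k < n * T) delta ^+ k * u i (b (cycidx w (i * T + k))).
  by apply: eq_bigr => k _; rewrite (cycidx_w k w).
by apply: (wavg_bounds (c := fun k => u i (b (cycidx w (i * T + k))))) => // k _; apply: h.
Qed.

Lemma blk_lt (T : nat) (i : 'I_n) k : (k < T)%N -> (i * T + k < n * T)%N.
Proof.
move=> kT; apply: (@leq_trans (i.+1 * T)); first by rewrite mulSn [X in (_ < X)%N]addnC ltn_add2l.
by rewrite leq_mul2r ltn_ord orbT.
Qed.

Definition bs T (lo hi : 'I_n -> A) (s : {ffun 'I_n -> bool}) : {ffun 'I_(n * T) -> A} :=
  [ffun j : 'I_(n * T) => if s (cycidx (Ordinal n0) (j %/ T)) then hi (cycidx (Ordinal n0) (j %/ T))
                           else lo (cycidx (Ordinal n0) (j %/ T))].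

Lemma Upay_head (delta : R) T lo hi s i : 0 < delta <= 1 -> (0 < T)%N ->
  `|Upay u delta (bs T lo hi s) i - u i (if s i then hi i else lo i)| <= 2 * Mu * n%:R * delta ^+ T.
Proof.
move=> hd T0.
have m0 : (0 < n * T)%N by rewrite muln_gt0 n0.
pose w := Ordinal m0.
rewrite /Upay.
have -> : \sum_(k < n * T) delta ^+ k * u i (bs T lo hi s (cycidx k (i * T + k))) =
          \sum_(k < n * T) delta ^+ k * u i (bs T lo hi s (cycidx w (i * T + k))).
  by apply: eq_bigr => k _; rewrite (cycidx_w k w).
have Tm : (T <= n * T)%N by rewrite leq_pmull // n0.
have := @wavg_head R (n * T) T delta Mu (u i (if s i then hi i else lo i))
   (fun k => u i (bs T lo hi s (cycidx w (i * T + k)))) T0 Tm hd.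
move=> /(_ _ (fun k _ => uMu _ _) (uMu _ _)) h.
have {}h := h _.
apply: (le_trans (h _)).
  move=> k kT; rewrite /bs ffunE.
  have -> : cycidx (Ordinal n0) (cycidx w (i * T + k) %/ T) = i.
    apply: val_inj; rewrite /= (modn_small (blk_lt i kT)) divnMDl // divn_small // addn0.
    by rewrite modn_small.
  by [].
set S1 := \sum_(0 <= k < T) delta ^+ k; set S2 := \sum_(T <= k < n * T) delta ^+ k.
have d0 : 0 < delta by case/andP: hd.
have S1gt : 0 < S1.
  rewrite /S1 big_mkord; have /andP[h1 _] := sum_bounds T hd.
  by apply: lt_le_trans h1; rewrite mulr_gt0 ?ltr0n ?exprn_gt0.
have [n' en] : exists n', n = n'.+1 by exists n.-1; rewrite prednK // n0.
have h2 := @tail_bound R n' T delta hd; rewrite -en -/S1 -/S2 in h2.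
rewrite -!mulrA ler_wpM2l // ler_wpM2l ?Mu_ge0 // ler_pdivrMr //.
apply: (le_trans h2); rewrite -!mulrA ler_wpM2r ?mulr_ge0 ?exprn_ge0 ?(ltW d0) ?(ltW S1gt) //.
by rewrite en ler_nat.
Qed.

Lemma part2b : forall eps : R, 0 < eps -> exists eta : R, 0 < eta /\
     forall (delta : R) (T : nat), 0 < delta <= 1 -> (0 < T)%N ->
       delta ^+ T < eta -> hclose (Fset u delta T) (box u) eps.
Proof.
move=> eps eps0.
have n1 : 1 <= n%:R :> R by rewrite ler1n n0.
have c1 : 1 <= 1 :> R by [].
have K0 : 0 <= 2 * Mu * n%:R :> R by rewrite !mulr_ge0 ?Mu_ge0 //; lra.
have [eta [eta0 etac etaK]] := pick_eta c1 K0 eps0.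
exists eta; split => // delta T hd T0 hx.
have d0 : 0 < delta by case/andP: hd.
have hx1 : 0 < delta ^+ T <= 1.
  case/andP: hd => d1 d2; rewrite exprn_gt0 //= exprn_ile1 // ltW //.
have m0 : (0 < n * T)%N by rewrite muln_gt0 n0.
split.
- move=> x [w [w0 w1 xe]]; exists x; split; last by move=> i; rewrite subrr normr0 ltW.
  have [b _] : exists b : {ffun 'I_(n * T) -> A}, true.
    case: (pickP (fun _ : {ffun 'I_(n * T) -> A} => true)) => [b _|h]; first by exists b.
    by move: w1; rewrite big_pred0 // => /esym/eqP; rewrite oner_eq0.
  pose a0 := b (Ordinal m0).
  move=> i.
  have [amin hmin] := exists_min (u i) a0.
  have [amax hmax] := exists_max (u i) a0.
  have hx' : u i amin <= x i <= u i amax.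
    rewrite xe; apply: comb_bounds => // b'.
    by apply: Upay_bounds => // a; rewrite hmin hmax.
  by case/andP: hx' => h1 h2; split; [exists amin | exists amax].
- move=> y hy.
  have [lo hlo] : exists lo : 'I_n -> A, forall i, u i (lo i) <= y i.
    by apply: (@fin_all_exists _ (fun _ => A) (fun i a => u i a <= y i)) => i; case: (hy i).
  have [hi hhi] : exists hi : 'I_n -> A, forall i, y i <= u i (hi i).
    by apply: (@fin_all_exists _ (fun _ => A) (fun i a => y i <= u i a)) => i; case: (hy i).
  pose t i := if u i (lo i) < u i (hi i) then
                (y i - u i (lo i)) / (u i (hi i) - u i (lo i)) else 0.
  have ht : forall i, 0 <= t i <= 1 /\ t i * u i (hi i) + (1 - t i) * u i (lo i) = y i.
    move=> i; rewrite /t; have l1 := hlo i; have l2 := hhi i.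
    case: ifP => hlt.
      have dpos : 0 < u i (hi i) - u i (lo i) by rewrite subr_gt0.
      split.
        apply/andP; split; first by apply: divr_ge0; rewrite subr_ge0 // ltW.
        rewrite ler_pdivrMr // mul1r; lra.
      field; by rewrite gt_eqF.
    move/negbT: hlt; rewrite -leNgt => hle.
    split; first by rewrite lexx ler01.
    rewrite mul0r add0r subr0 mul1r; lra.
  have ht1 : forall i, 0 <= t i <= 1 by move=> i; case: (ht i).
  exists (fun i => \sum_s pw t s * Upay u delta (bs T lo hi s) i); split.
    apply: (@hull_push _ _ _ _ _ (bs T lo hi) (pw t)) => //.
    - by move=> s; apply: pw_ge0.
    - exact: pw_sum.
  move=> i.
  have -> : y i = \sum_s pw t s * u i (if s i then hi i else lo i).
    have <- := (ht i).2.
    rewrite -prod_marg; apply: eq_bigr => s' _; by rewrite (fun_if (u i)).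
  apply: comb_close => //; first by move=> s; apply: pw_ge0.
    exact: pw_sum.
  move=> s; apply: (le_trans (Upay_head _ _ _ _ hd T0)).
  have : 2 * Mu * n%:R * delta ^+ T <= 2 * Mu * n%:R * eta by rewrite ler_wpM2l // ltW.
  lra.
Qed.

End Main.

Unset Implicit Arguments.

Theorem corollary1 (R : realType) (n : nat) (Ai : 'I_n -> finType)
  (u : 'I_n -> {dffun forall i : 'I_n, Ai i} -> R) (lam : 'I_n -> R) :
  (2 <= n)%N ->
  (forall i, 0 < #|Ai i|)%N ->
  (exists i, lam i != 0) ->
  [/\
  (* (1) maximizers for Delta = delta^T close to 1 *)
   (exists eta : R, 0 < eta /\
     forall (delta : R) (T : nat), 0 < delta <= 1 -> (0 < T)%N ->
       1 - eta < delta ^+ T ->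
       forall a : {ffun 'I_n -> {dffun forall i : 'I_n, Ai i}},
         is_maximizer u lam (delta ^+ T) a ->
         forall (k : 'I_n) (a' : {dffun forall i : 'I_n, Ai i}),
           dotu u lam a' <= dotu u lam (a k)),
  (* (1) F(delta,T) -> V as delta^T increases to 1 *)
   (forall eps : R, 0 < eps -> exists eta : R, 0 < eta /\
     forall (delta : R) (T : nat), 0 < delta <= 1 -> (0 < T)%N ->
       1 - eta < delta ^+ T -> hclose (Fset u delta T) (Vset u) eps),
  (* (2) maximizers for Delta = delta^T close to 0 *)
   (exists eta : R, 0 < eta /\
     forall (delta : R) (T : nat), 0 < delta <= 1 -> (0 < T)%N ->
       delta ^+ T < eta ->
       forall a : {ffun 'I_n -> {dffun forall i : 'I_n, Ai i}},
         is_maximizer u lam (delta ^+ T) a ->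
         forall (k : 'I_n) (a' : {dffun forall i : 'I_n, Ai i}),
           lam k * u k a' <= lam k * u k (a k)) &
  (* (2) F(delta,T) -> box as delta^T decreases to 0 *)
   (forall eps : R, 0 < eps -> exists eta : R, 0 < eta /\
     forall (delta : R) (T : nat), 0 < delta <= 1 -> (0 < T)%N ->
       delta ^+ T < eta -> hclose (Fset u delta T) (box u) eps)].
Proof.
move=> n2 _ _; split.
- exact: (part1a u lam n2).
- exact: (part1b u n2).
- exact: (part2a u lam n2).
- exact: (part2b u n2).
Qed.
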